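(* Let $V$ be a finite-dimensional vector space over $k$ with basis $\xi_1,\dots,\xi_n$, and let $W(V)$ be the Lie algebra of $k$-linear derivations of $k[\xi_1,\dots,\xi_n]=\mathrm{Sym}(V)$, with elements $f\partial_i$ and bracket $[f\partial_i,g\partial_j]=f\frac{\partial g}{\partial\xi_i}\partial_j-g\frac{\partial f}{\partial\xi_j}\partial_i$. Let $M$ be a vector space, $\mu:W(V)\otimes M\to M$ linear, and let $a:\mathrm{Sym}(V)\otimes M\to V\otimes M$ correspond to $\mu$ via $a(f\otimes x)=\sum_{i=1}^n\xi_i\otimes\mu(f\partial_i\otimes x)$. Then $\mu$ defines a representation of the Lie algebra $W(V)$ on $M$ if and only if $[a_1,a_2]=a'-a''$ as maps $\mathrm{Sym}(V)\otimes\mathrm{Sym}(V)\otimes M\to V\otimes V\otimes M$.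
   Context: Notation: $\tau$ denotes the symmetry swapping the first two tensor factors (of whatever type). $a_2=\mathrm{id}_{\mathrm{Sym}V}\otimes a$ and $a_1=\tau(\mathrm{id}\otimes a)\tau$, so that $a_1a_2$ and $a_2a_1$ are both maps $\mathrm{Sym}V\otimes\mathrm{Sym}V\otimes M\to V\otimes V\otimes M$, and $[a_1,a_2]=a_1a_2-a_2a_1$. $\Delta:\mathrm{Sym}V\to V\otimes\mathrm{Sym}V$ is $f\mapsto\sum_i\xi_i\otimes\partial f/\partial\xi_i$ and $m:\mathrm{Sym}V\otimes\mathrm{Sym}V\to\mathrm{Sym}V$ is multiplication. $a'$ is the composite $\mathrm{Sym}V\otimes\mathrm{Sym}V\otimes M\xrightarrow{\mathrm{id}\otimes\Delta\otimes\mathrm{id}}\mathrm{Sym}V\otimes V\otimes\mathrm{Sym}V\otimes M\xrightarrow{\tau\otimes\mathrm{id}\otimes\mathrm{id}}V\otimes\mathrm{Sym}V\otimes\mathrm{Sym}V\otimes M\xrightarrow{\mathrm{id}\otimes m\otimes\mathrm{id}}V\otimes\mathrm{Sym}V\otimes M\xrightarrow{\mathrm{id}\otimes a}V\otimes V\otimes M$, and $a''=\tau a'\tau$. A representation means $\mu([X,Y]\otimes x)=\mu(X\otimes\mu(Y\otimes x))-\mu(Y\otimes\mu(X\otimes x))$. *)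

(* Defs.v *)
From HB Require Import structures.
From mathcomp Require Import all_boot all_order all_algebra.
From mathcomp Require Import mpoly.
Set Implicit Arguments. Unset Strict Implicit. Unset Printing Implicit Defensive.
Import GRing.Theory.
Local Open Scope ring_scope.

(* V = k^n with basis xi_1..xi_n;  Sym V = {mpoly k[n]} (xi_i = 'X_i).
   W(V) = derivations of Sym V: a derivation sum_i f_i d_i is encoded by the
   finite function i |-> f_i. *)
Definition Wder (n : nat) (k : fieldType) := {ffun 'I_n -> {mpoly k[n]}}.

Definition fdi (n : nat) (k : fieldType) (f : {mpoly k[n]}) (i : 'I_n) : Wder n k :=
  [ffun j => if j == i then f else 0].

(* Lie bracket of derivations: [X,Y]_j = sum_i (X_i dY_j/dxi_i - Y_i dX_j/dxi_i);
   on f d_i, g d_j it gives f (dg/dxi_i) d_j - g (df/dxi_j) d_i. *)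
Definition Wbracket (n : nat) (k : fieldType) (X Y : Wder n k) : Wder n k :=
  [ffun j => \sum_(i < n) (X i * mderiv i (Y j) - Y i * mderiv i (X j))].

(* A linear map W(V) (x) M -> M is encoded as a k-bilinear map. *)
Definition bilinear_mu (n : nat) (k : fieldType) (M : lmodType k)
  (mu : Wder n k -> M -> M) : Prop :=
  (forall (c : k) X Y x, mu (c *: X + Y) x = c *: mu X x + mu Y x) /\
  (forall (c : k) X x y, mu X (c *: x + y) = c *: mu X x + mu X y).

Definition is_representation (n : nat) (k : fieldType) (M : lmodType k)
  (mu : Wder n k -> M -> M) : Prop :=
  forall X Y x, mu (Wbracket X Y) x = mu X (mu Y x) - mu Y (mu X x).

(* Tensors: V (x) M is identified with M^n via the basis xi_i
   (coordinate i of sum_i xi_i (x) m_i is m_i), and V (x) V (x) M with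
   functions 'I_n -> 'I_n -> M.  Linear maps out of Sym V (x) M, resp.
   Sym V (x) Sym V (x) M, are given by their values on pure tensors. *)

Definition a_of (n : nat) (k : fieldType) (M : lmodType k)
  (mu : Wder n k -> M -> M) (f : {mpoly k[n]}) (x : M) : 'I_n -> M :=
  fun i => mu (fdi f i) x.

Section Composites.
Variables (n : nat) (k : fieldType) (M : lmodType k) (mu : Wder n k -> M -> M).
Local Notation a := (a_of mu).

(* a_1 a_2 (f (x) g (x) x): a_2 gives sum_j f (x) xi_j (x) a(g,x)_j,
   then a_1 = tau (id (x) a) tau gives sum_{i,j} xi_i (x) xi_j (x) a(f, a(g,x)_j)_i *)
Definition a1a2 (f g : {mpoly k[n]}) (x : M) : 'I_n -> 'I_n -> M :=
  fun i j => a f (a g x j) i.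
Definition a2a1 (f g : {mpoly k[n]}) (x : M) : 'I_n -> 'I_n -> M :=
  fun i j => a g (a f x i) j.
Definition a_prime (f g : {mpoly k[n]}) (x : M) : 'I_n -> 'I_n -> M :=
  fun i j => a (f * mderiv i g) x j.
(* a'' = tau a' tau *)
Definition a_second (f g : {mpoly k[n]}) (x : M) : 'I_n -> 'I_n -> M :=
  fun i j => a_prime g f x j i.
End Composites.

(* Main.v *)
Require Import Defs.
From HB Require Import structures.
From mathcomp Require Import all_boot all_order all_algebra.
From mathcomp Require Import mpoly.
Import GRing.Theory.
Local Open Scope ring_scope.

Section Aux.
Variables (k : fieldType) (n : nat) (M : lmodType k) (mu : Wder n k -> M -> M).
Hypothesis H : bilinear_mu mu.

Lemma muDl X Y x : mu (X + Y) x = mu X x + mu Y x.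
Proof. by case: H => H1 _; have := H1 1 X Y x; rewrite !scale1r. Qed.
Lemma mu0l x : mu 0 x = 0.
Proof. have h := muDl 0 0 x; rewrite addr0 in h. by apply: (addrI (mu 0 x)); rewrite addr0 -h. Qed.
Lemma muNl X x : mu (- X) x = - mu X x.
Proof. by case: H => H1 _; have := H1 (-1) X 0 x; rewrite !addr0 mu0l addr0 !scaleN1r. Qed.
Lemma muBl X Y x : mu (X - Y) x = mu X x - mu Y x.
Proof. by rewrite muDl muNl. Qed.
Lemma muDr X x y : mu X (x + y) = mu X x + mu X y.
Proof. by case: H => _ H2; have := H2 1 X x y; rewrite !scale1r. Qed.
Lemma mu0r X : mu X 0 = 0.
Proof. have h := muDr X 0 0; rewrite addr0 in h. by apply: (addrI (mu X 0)); rewrite addr0 -h. Qed.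
Lemma muNr X x : mu X (- x) = - mu X x.
Proof. by case: H => _ H2; have := H2 (-1) X x 0; rewrite !addr0 mu0r addr0 !scaleN1r. Qed.
Lemma muBr X x y : mu X (x - y) = mu X x - mu X y.
Proof. by rewrite muDr muNr. Qed.

Lemma mu_suml I (r : seq I) (P : pred I) F x :
  mu (\sum_(i <- r | P i) F i) x = \sum_(i <- r | P i) mu (F i) x.
Proof. exact: (big_morph (fun X => mu X x) (fun X Y => muDl X Y x) (mu0l x)). Qed.
Lemma mu_sumr I (r : seq I) (P : pred I) F X :
  mu X (\sum_(i <- r | P i) F i) = \sum_(i <- r | P i) mu X (F i).
Proof. exact: (big_morph (mu X) (muDr X) (mu0r X)). Qed.
End Aux.

Lemma sum_if_eq (R : nmodType) m (l : 'I_m) (F : 'I_m -> R) :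
  \sum_(j < m) (if l == j then F j else 0) = F l.
Proof.
rewrite (bigD1 l) //= eqxx big1 ?addr0 // => j /negbTE.
by rewrite eq_sym => ->.
Qed.

Lemma Wdecomp (k : fieldType) (n : nat) (X : Wder n k) :
  X = \sum_(i < n) fdi (X i) i.
Proof.
apply/ffunP => j; rewrite sum_ffunE.
under eq_bigr do rewrite ffunE.
by rewrite (eq_bigr (fun i => if j == i then X i else 0)) ?sum_if_eq //
  => i _; case: eqP => // ->.
Qed.

Lemma Wbracket_fdi (k : fieldType) (n : nat) (f g : {mpoly k[n]}) i j :
  Wbracket (fdi f i) (fdi g j) = fdi (f * mderiv i g) j - fdi (g * mderiv j f) i.
Proof.
apply/ffunP => l; rewrite !ffunE.
under eq_bigr do rewrite !ffunE.
rewrite sumrB (bigD1 i) //= eqxx big1 ?addr0; last by move=> m /negbTE ->; rewrite mul0r.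
rewrite (bigD1 j) //= eqxx big1 ?addr0; last by move=> m /negbTE ->; rewrite mul0r.
by case: eqP => _; case: eqP => _; rewrite ?raddf0 ?mderiv0 ?mulr0 ?subr0 ?addr0 ?sub0r.
Qed.

Lemma sumW (k : fieldType) (n : nat) I (r : seq I) (P : pred I) (F : I -> Wder n k) l :
  (\sum_(i <- r | P i) F i) l = \sum_(i <- r | P i) F i l.
Proof. exact: sum_ffunE. Qed.

Lemma Wbracket_decomp (k : fieldType) (n : nat) (X Y : Wder n k) :
  Wbracket X Y = \sum_(i < n) \sum_(j < n) Wbracket (fdi (X i) i) (fdi (Y j) j).
Proof.
apply/ffunP => l; rewrite !ffunE.
rewrite sumW.
transitivity (\sum_(i < n) \sum_(j < n) ((if l == j then X i * mderiv i (Y j) else 0)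
   - (if l == i then Y j * mderiv j (X i) else 0))); last first.
  apply: eq_bigr => i _; rewrite sumW; apply: eq_bigr => j _.
  by rewrite Wbracket_fdi !ffunE.
symmetry.
under eq_bigr do rewrite sumrB.
rewrite sumrB [RHS]sumrB; congr (_ - _).
  by apply: eq_bigr => i _; rewrite sum_if_eq.
rewrite exchange_big /=.
by apply: eq_bigr => j _; rewrite sum_if_eq.
Qed.

Theorem proposition6p2 (k : fieldType) (n : nat) (M : lmodType k)
    (mu : Wder n k -> M -> M) :
  bilinear_mu mu ->
  (is_representation mu <->
   (forall (f g : {mpoly k[n]}) (x : M) (i j : 'I_n),
      a1a2 mu f g x i j - a2a1 mu f g x i j
      = a_prime mu f g x i j - a_second mu f g x i j)).
Proof.
move=> H; split.
  move=> R f g x i j.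
  rewrite /a1a2 /a2a1 /a_second /a_prime /a_of -R Wbracket_fdi.
  by rewrite (@muBl _ _ _ _ H).
move=> E X Y x.
pose A i := fdi (X i) i; pose B j := fdi (Y j) j.
transitivity (\sum_(i < n) \sum_(j < n) (mu (A i) (mu (B j) x) - mu (B j) (mu (A i) x))).
  rewrite Wbracket_decomp (@mu_suml _ _ _ _ H); apply: eq_bigr => i _.
  rewrite (@mu_suml _ _ _ _ H); apply: eq_bigr => j _.
  have := E (X i) (Y j) x i j.
  rewrite /a1a2 /a2a1 /a_second /a_prime /a_of => ->.
  by rewrite Wbracket_fdi (@muBl _ _ _ _ H).
rewrite [in RHS](@Wdecomp _ _ X) [in RHS](@Wdecomp _ _ Y) -/A -/B.
rewrite !(@mu_suml _ _ _ _ H).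
symmetry.
under eq_bigr do rewrite (@mu_sumr _ _ _ _ H).
under [X in _ - X = _]eq_bigr do rewrite (@mu_sumr _ _ _ _ H).
rewrite [X in _ - X = _]exchange_big /= -sumrB.
by apply: eq_bigr => i _; rewrite -sumrB.
Qed.
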